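(* Consider the synchronous network with DP-MSR (parameter $f$) under the $f$-total malicious model, with $1+\frac{T^2}{2}\le\alpha T\le 2-\frac{T^2}{2}$, on an arbitrary digraph $\mathcal{G}$. For $k\ge 1$ let $\overline{x}[k]=\max_{i\notin\mathcal{M}}\max\{\hat{x}_i[k],\hat{x}_i[k-1]\}$ and $\underline{x}[k]=\min_{i\notin\mathcal{M}}\min\{\hat{x}_i[k],\hat{x}_i[k-1]\}$. Then, for every choice of initial conditions and malicious inputs, $\overline{x}[k]$ is nonincreasing and $\underline{x}[k]$ is nondecreasing in $k\ge 1$.
   Context: Graphs. A digraph $\mathcal{G}=(\mathcal{V},\mathcal{E})$ has node set $\mathcal{V}=\{1,\dots,n\}$ and edge set without self-loops; $(j,i)\in\mathcal{E}$ means node $i$ receives information from $j$; $\mathcal{N}_i=\{j:(j,i)\in\mathcal{E}\}$. Fix $\gamma>0$ and weights $a_{ij}\in[\gamma,1)$ for $(j,i)\in\mathcal{E}$ with $\sum_{j\in\mathcal{N}_i}a_{ij}\le 1$. Agents. Each agent $i$ has position $\hat{x}_i[k]$ and velocity $v_i[k]$ with $\hat{x}_i[k+1]=\hat{x}_i[k]+Tv_i[k]+\frac{T^2}{2}u_i[k]$, $v_i[k+1]=v_i[k]+Tu_i[k]$, $T>0$. Agents in the malicious set $\mathcal{M}$ use arbitrary inputs; normal agents use $u_i[k]=-\sum_{j\in\mathcal{N}_i}a_{ij}[k](\hat{x}_i[k]-\hat{x}_j[k])-\alpha v_i[k]$, $\alpha>0$, with $a_{ij}[k]$ from DP-MSR.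 DP-MSR algorithm (parameter $f$), synchronous: at each time $k$, each normal agent $i$ considers the relative positions $\hat{x}_j[k]-\hat{x}_i[k]$, $j\in\mathcal{N}_i$. If fewer than $f$ neighbors have relative value $\ge 0$, it ignores all of those; otherwise it ignores $f$ neighbors with the largest relative values. Similarly for values $\le 0$ and the $f$ smallest. Then $a_{ij}[k]=0$ for ignored neighbors and $a_{ij}[k]=a_{ij}$ otherwise. $f$-total malicious model: $|\mathcal{M}|\le f$. *)

(* Defs.v *)
(* R is an arbitrary real field (statement is purely order-algebraic). *)
From HB Require Import structures.
From mathcomp Require Import all_boot all_order all_algebra.
Set Implicit Arguments. Unset Strict Implicit. Unset Printing Implicit Defensive.
Import Order.TTheory GRing.Theory Num.Theory.
Local Open Scope ring_scope.

(* Convention: [E j i] means (j,i) is an edge: node i receives from j. *)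

(* DP-MSR "large" rule for agent i with relative values d j = x_j - x_i:
   Sl is the set of ignored neighbours on the large side. *)
Definition dpmsr_large (R : realFieldType) (n : nat) (E : rel 'I_n)
    (d : 'I_n -> R) (f : nat) (i : 'I_n) (Sl : {set 'I_n}) : Prop :=
  let P := [set j | E j i && (0 <= d j)] in
  if (#|P| < f)%N then Sl = P
  else [/\ Sl \subset P, #|Sl| = f &
         forall j j', j \in Sl -> E j' i -> j' \notin Sl -> d j' <= d j].

Definition dpmsr_small (R : realFieldType) (n : nat) (E : rel 'I_n)
    (d : 'I_n -> R) (f : nat) (i : 'I_n) (Ss : {set 'I_n}) : Prop :=
  let P := [set j | E j i && (d j <= 0)] in
  if (#|P| < f)%N then Ss = P
  else [/\ Ss \subset P, #|Ss| = f &
         forall j j', j \in Ss -> E j' i -> j' \notin Ss -> d j <= d j'].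

Definition dpmsr_ignored (R : realFieldType) (n : nat) (E : rel 'I_n)
    (x : 'I_n -> R) (f : nat) (i : 'I_n) (S : {set 'I_n}) : Prop :=
  let d := fun j => x j - x i in
  exists Sl Ss, [/\ dpmsr_large E d f i Sl, dpmsr_small E d f i Ss & S = Sl :|: Ss].

(* Upper / lower envelopes over normal agents (i \notin M) of the values at
   times k and k-1.  The seed i0 must be a normal agent, so that the big max
   is exactly the maximum over the (nonempty) normal set. *)
Definition xbar (R : realFieldType) (n : nat) (M : {set 'I_n}) (i0 : 'I_n)
    (x : nat -> 'I_n -> R) (k : nat) : R :=
  \big[Num.max/Num.max (x k i0) (x k.-1 i0)]_(i | i \notin M)
     Num.max (x k i) (x k.-1 i).

Definition xlow (R : realFieldType) (n : nat) (M : {set 'I_n}) (i0 : 'I_n)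
    (x : nat -> 'I_n -> R) (k : nat) : R :=
  \big[Num.min/Num.min (x k i0) (x k.-1 i0)]_(i | i \notin M)
     Num.min (x k i) (x k.-1 i).

(* Main.v *)
Require Import Defs.
From HB Require Import structures.
From mathcomp Require Import all_boot all_order all_algebra.
From mathcomp Require Import ring lra.
Import Order.TTheory GRing.Theory Num.Theory.
Local Open Scope ring_scope.

Lemma sum_split (R : realFieldType) (n : nat) (P : pred 'I_n) (w y : 'I_n -> R) (z : R) :
  \sum_(j | P j) w j * (z - y j) = (\sum_(j | P j) w j) * z - \sum_(j | P j) w j * y j.
Proof.
rewrite mulr_suml -sumrB; apply: eq_bigr => j _; ring.
Qed.

Lemma step_gen (R : realFieldType) (n : nat) (Q : pred 'I_n) (Q0 : pred 'I_n)
  (w : 'I_n -> R) (T alpha : R) (S1 S0 : pred 'I_n)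
  (x2 x1 x0 v1 v0 u1 u0 B : R) (y1 y0 : 'I_n -> R) :
  (forall j, Q j -> 0 <= w j) -> \sum_(j | Q j) w j <= 1 ->
  1 + T ^+ 2 / 2%:R <= alpha * T -> alpha * T <= 2%:R - T ^+ 2 / 2%:R ->
  x2 = x1 + T * v1 + T ^+ 2 / 2%:R * u1 -> v1 = v0 + T * u0 ->
  x1 = x0 + T * v0 + T ^+ 2 / 2%:R * u0 ->
  u1 = - (\sum_(j | Q j && S1 j) w j * (x1 - y1 j)) - alpha * v1 ->
  u0 = - (\sum_(j | Q j && S0 j) w j * (x0 - y0 j)) - alpha * v0 ->
  x1 <= B -> x0 <= B ->
  (forall j, Q j && S1 j -> y1 j <= B) -> (forall j, Q j && S0 j -> y0 j <= B) ->
  x2 <= B.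
Proof.
move=> w0 ws1 h1 h2 e2 ev e1 eu1 eu0 hx1 hx0 hy1 hy0.
have sle : forall S : pred 'I_n, 0 <= \sum_(j | Q j && S j) w j <= 1.
  move=> S; apply/andP; split; first by apply: sumr_ge0 => j /andP[/w0].
  apply: le_trans ws1; rewrite big_mkcondr /=; apply: ler_sum => j /w0 hj.
  by case: (S j).
have P1 : 0 <= \sum_(j | Q j && S1 j) w j * (B - y1 j).
  apply: sumr_ge0 => j hj; apply: mulr_ge0; first by case/andP: hj => /w0.
  by rewrite subr_ge0 hy1.
have P0 : 0 <= \sum_(j | Q j && S0 j) w j * (B - y0 j).
  apply: sumr_ge0 => j hj; apply: mulr_ge0; first by case/andP: hj => /w0.
  by rewrite subr_ge0 hy0.
move: eu1 eu0 P1 P0 (sle S1) (sle S0); rewrite !sum_split.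
set s1 := \sum_(j | Q j && S1 j) w j.
set s0 := \sum_(j | Q j && S0 j) w j.
set W1 := \sum_(j | Q j && S1 j) w j * y1 j.
set W0 := \sum_(j | Q j && S0 j) w j * y0 j.
set c := T ^+ 2 / 2%:R.
move=> eu1 eu0 P1 P0 /andP[s1a s1b] /andP[s0a s0b].
have key : B - x2 = (2%:R - alpha * T - c * s1) * (B - x1)
     + (alpha * T - 1 - c * s0) * (B - x0) + c * (s1 * B - W1) + c * (s0 * B - W0).
  by rewrite e2 eu1 ev e1 eu0 /c; field.
have c0 : 0 <= c by rewrite /c divr_ge0 // ?sqr_ge0 // ler0n.
have A1 : 0 <= 2%:R - alpha * T - c * s1.
  have : c * s1 <= c by rewrite -{2}(mulr1 c) ler_wpM2l.
  move: h2; rewrite -/c; lra.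
have A0 : 0 <= alpha * T - 1 - c * s0.
  have : c * s0 <= c by rewrite -{2}(mulr1 c) ler_wpM2l.
  move: h1; rewrite -/c; lra.
rewrite -subr_ge0 key.
have d1 : 0 <= B - x1 by rewrite subr_ge0.
have d0 : 0 <= B - x0 by rewrite subr_ge0.
by rewrite !addr_ge0 // mulr_ge0.
Qed.

Lemma step_gen_low (R : realFieldType) (n : nat) (Q : pred 'I_n) (Q0 : pred 'I_n)
  (w : 'I_n -> R) (T alpha : R) (S1 S0 : pred 'I_n)
  (x2 x1 x0 v1 v0 u1 u0 b : R) (y1 y0 : 'I_n -> R) :
  (forall j, Q j -> 0 <= w j) -> \sum_(j | Q j) w j <= 1 ->
  1 + T ^+ 2 / 2%:R <= alpha * T -> alpha * T <= 2%:R - T ^+ 2 / 2%:R ->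
  x2 = x1 + T * v1 + T ^+ 2 / 2%:R * u1 -> v1 = v0 + T * u0 ->
  x1 = x0 + T * v0 + T ^+ 2 / 2%:R * u0 ->
  u1 = - (\sum_(j | Q j && S1 j) w j * (x1 - y1 j)) - alpha * v1 ->
  u0 = - (\sum_(j | Q j && S0 j) w j * (x0 - y0 j)) - alpha * v0 ->
  b <= x1 -> b <= x0 ->
  (forall j, Q j && S1 j -> b <= y1 j) -> (forall j, Q j && S0 j -> b <= y0 j) ->
  b <= x2.
Proof.
move=> w0 ws1 h1 h2 e2 ev e1 eu1 eu0 hx1 hx0 hy1 hy0.
have sN : forall (S : pred 'I_n) (z : R) (y : 'I_n -> R),
    \sum_(j | Q j && S j) w j * (- z - - y j) = - \sum_(j | Q j && S j) w j * (z - y j).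
  move=> S z y; rewrite -sumrN; apply: eq_bigr => j _; ring.
rewrite -(opprK b) -(opprK x2) lerN2.
apply: (@step_gen R n Q Q0 w T alpha S1 S0 (- x2) (- x1) (- x0) (- v1) (- v0) (- u1) (- u0) (- b)
   (fun j => - y1 j) (fun j => - y0 j)) => //.
- by rewrite e2; ring.
- by rewrite ev; ring.
- by rewrite e1; ring.
- by rewrite sN eu1; ring.
- by rewrite sN eu0; ring.
- by rewrite lerN2.
- by rewrite lerN2.
- by move=> j /hy1; rewrite lerN2.
- by move=> j /hy0; rewrite lerN2.
Qed.

Lemma nb_up (R : realFieldType) (n : nat) (E : rel 'I_n) (y : 'I_n -> R) (f : nat)
  (i : 'I_n) (S M : {set 'I_n}) :
  (#|M| <= f)%N -> i \notin M -> dpmsr_ignored E y f i S ->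
  forall j, E j i && (j \notin S) -> exists2 p, p \notin M & y j <= y p.
Proof.
move=> hM iM [Sl [Ss [hl hs eS]]] j /andP[Eji jS].
case jM: (j \in M); last by exists j; rewrite ?jM.
case: (leP 0 (y j - y i)) => hd; last by exists i => //; move: hd; lra.
have jSl : j \notin Sl by apply: contra jS; rewrite eS inE => ->.
move: hl; rewrite /dpmsr_large /=; case: ifP => hc.
  by move=> eSl; move: jSl; rewrite eSl inE Eji hd.
case=> sub card hmax.
case: (boolP [exists j0, (j0 \in Sl) && (j0 \notin M)]).
  case/existsP=> j0 /andP[j0Sl j0M]; exists j0 => //.
  by have := hmax j0 j j0Sl Eji jSl; lra.
rewrite negb_exists => /forallP hall.
have : j |: Sl \subset M.
  apply/subsetP => z; rewrite !inE => /orP[/eqP -> //|zS].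
  by have := hall z; rewrite zS /= negbK.
move/subset_leq_card; rewrite cardsU1 jSl card => h.
have := leq_trans h hM; by rewrite add1n ltnn.
Qed.

Lemma nb_low (R : realFieldType) (n : nat) (E : rel 'I_n) (y : 'I_n -> R) (f : nat)
  (i : 'I_n) (S M : {set 'I_n}) :
  (#|M| <= f)%N -> i \notin M -> dpmsr_ignored E y f i S ->
  forall j, E j i && (j \notin S) -> exists2 p, p \notin M & y p <= y j.
Proof.
move=> hM iM [Sl [Ss [hl hs eS]]] j /andP[Eji jS].
case jM: (j \in M); last by exists j; rewrite ?jM.
case: (leP (y j - y i) 0) => hd; last by exists i => //; move: hd; lra.
have jSl : j \notin Ss by apply: contra jS; rewrite eS inE => ->; rewrite orbT.
move: hs; rewrite /dpmsr_small /=; case: ifP => hc.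
  by move=> eSl; move: jSl; rewrite eSl inE Eji hd.
case=> sub card hmax.
case: (boolP [exists j0, (j0 \in Ss) && (j0 \notin M)]).
  case/existsP=> j0 /andP[j0Sl j0M]; exists j0 => //.
  by have := hmax j0 j j0Sl Eji jSl; lra.
rewrite negb_exists => /forallP hall.
have : j |: Ss \subset M.
  apply/subsetP => z; rewrite !inE => /orP[/eqP -> //|zS].
  by have := hall z; rewrite zS /= negbK.
move/subset_leq_card; rewrite cardsU1 jSl card => h.
have := leq_trans h hM; by rewrite add1n ltnn.
Qed.

Lemma xbar_ge (R : realFieldType) (n : nat) (M : {set 'I_n}) (i0 : 'I_n)
  (x : nat -> 'I_n -> R) (k : nat) p :
  p \notin M -> x k p <= xbar M i0 x k /\ x k.-1 p <= xbar M i0 x k.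
Proof.
move=> pM; rewrite /xbar (bigD1 p) //=; split; rewrite !le_max lexx ?orbT //.
Qed.

Lemma xbar_le (R : realFieldType) (n : nat) (M : {set 'I_n}) (i0 : 'I_n)
  (x : nat -> 'I_n -> R) (k : nat) B :
  i0 \notin M -> (forall p, p \notin M -> x k p <= B /\ x k.-1 p <= B) ->
  xbar M i0 x k <= B.
Proof.
move=> i0M h; rewrite /xbar; apply: (big_ind (fun z => z <= B)).
- by case: (h i0 i0M) => h1 h2; rewrite ge_max h1 h2.
- by move=> a b ha hb; rewrite ge_max ha hb.
- by move=> p /h [h1 h2]; rewrite ge_max h1 h2.
Qed.

Lemma xlow_le (R : realFieldType) (n : nat) (M : {set 'I_n}) (i0 : 'I_n)
  (x : nat -> 'I_n -> R) (k : nat) p :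
  p \notin M -> xlow M i0 x k <= x k p /\ xlow M i0 x k <= x k.-1 p.
Proof.
move=> pM; rewrite /xlow (bigD1 p) //=; split; rewrite !ge_min lexx ?orbT //.
Qed.

Lemma xlow_ge (R : realFieldType) (n : nat) (M : {set 'I_n}) (i0 : 'I_n)
  (x : nat -> 'I_n -> R) (k : nat) b :
  i0 \notin M -> (forall p, p \notin M -> b <= x k p /\ b <= x k.-1 p) ->
  b <= xlow M i0 x k.
Proof.
move=> i0M h; rewrite /xlow; apply: (big_ind (fun z => b <= z)).
- by case: (h i0 i0M) => h1 h2; rewrite le_min h1 h2.
- by move=> a c ha hb; rewrite le_min ha hb.
- by move=> p /h [h1 h2]; rewrite le_min h1 h2.
Qed.

Theorem mainTheorem3 (R : realFieldType) (n : nat) (E : rel 'I_n)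
    (gamma : R) (a : 'I_n -> 'I_n -> R) (T alpha : R) (f : nat)
    (M : {set 'I_n}) (i0 : 'I_n)
    (x v u : nat -> 'I_n -> R) :
  (forall i, ~~ E i i) ->
  0 < gamma ->
  (forall i j, E j i -> gamma <= a i j /\ a i j < 1) ->
  (forall i, \sum_(j | E j i) a i j <= 1) ->
  0 < T -> 0 < alpha ->
  1 + T ^+ 2 / 2%:R <= alpha * T -> alpha * T <= 2%:R - T ^+ 2 / 2%:R ->
  (#|M| <= f)%N ->
  i0 \notin M ->
  (forall k i, x k.+1 i = x k i + T * v k i + T ^+ 2 / 2%:R * u k i) ->
  (forall k i, v k.+1 i = v k i + T * u k i) ->
  (forall k i, i \notin M ->
     exists S : {set 'I_n}, dpmsr_ignored E (x k) f i S /\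
       u k i = - (\sum_(j | E j i && (j \notin S)) a i j * (x k i - x k j))
               - alpha * v k i) ->
  forall k l, (1 <= k)%N -> (k <= l)%N ->
    xbar M i0 x l <= xbar M i0 x k /\ xlow M i0 x k <= xlow M i0 x l.
Proof.
move=> _ g0 ha hs T0 a0 h1 h2 hM i0M hx hv hu.
have w0 : forall i j, E j i -> 0 <= a i j.
  by move=> i j /ha [hg _]; apply: le_trans hg; apply: ltW.
have step : forall K, xbar M i0 x K.+2 <= xbar M i0 x K.+1 /\ xlow M i0 x K.+1 <= xlow M i0 x K.+2.
  move=> K.
  have pt : forall i, i \notin M ->
      x K.+2 i <= xbar M i0 x K.+1 /\ xlow M i0 x K.+1 <= x K.+2 i.
    move=> i iM.
    case: (hu K.+1 i iM) => S1 [ig1 eu1].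
    case: (hu K i iM) => S0 [ig0 eu0].
    have [b1 b0] := @xbar_ge _ _ M i0 x K.+1 _ iM.
    have [l1 l0] := @xlow_le _ _ M i0 x K.+1 _ iM.
    split.
    - apply: (@step_gen R n (fun j => E j i) (fun j => E j i) (a i) T alpha
        (fun j => j \notin S1) (fun j => j \notin S0)
        (x K.+2 i) (x K.+1 i) (x K i) (v K.+1 i) (v K i) (u K.+1 i) (u K i)
        (xbar M i0 x K.+1) (x K.+1) (x K)) => //.
      + by move=> j; apply: w0.
      + move=> j hj; have [p pM hp] := @nb_up _ _ _ _ _ _ _ _ hM iM ig1 _ hj.
        by apply: le_trans hp _; case: (@xbar_ge _ _ M i0 x K.+1 _ pM).
      + move=> j hj; have [p pM hp] := @nb_up _ _ _ _ _ _ _ _ hM iM ig0 _ hj.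
        by apply: le_trans hp _; case: (@xbar_ge _ _ M i0 x K.+1 _ pM).
    - apply: (@step_gen_low R n (fun j => E j i) (fun j => E j i) (a i) T alpha
        (fun j => j \notin S1) (fun j => j \notin S0)
        (x K.+2 i) (x K.+1 i) (x K i) (v K.+1 i) (v K i) (u K.+1 i) (u K i)
        (xlow M i0 x K.+1) (x K.+1) (x K)) => //.
      + by move=> j; apply: w0.
      + move=> j hj; have [p pM hp] := @nb_low _ _ _ _ _ _ _ _ hM iM ig1 _ hj.
        by apply: le_trans hp; case: (@xlow_le _ _ M i0 x K.+1 _ pM).
      + move=> j hj; have [p pM hp] := @nb_low _ _ _ _ _ _ _ _ hM iM ig0 _ hj.
        by apply: le_trans hp; case: (@xlow_le _ _ M i0 x K.+1 _ pM).
  split.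
  - apply: (@xbar_le _ _ M i0) => // p pM; split; first by case: (pt p pM).
    by case: (@xbar_ge _ _ M i0 x K.+1 _ pM).
  - apply: (@xlow_ge _ _ M i0) => // p pM; split; first by case: (pt p pM).
    by case: (@xlow_le _ _ M i0 x K.+1 _ pM).
move=> k l k1 kl.
rewrite -(subnKC kl); elim: (l - k)%N => [|d [IH1 IH2]]; first by rewrite addn0.
case: k k1 kl IH1 IH2 => [//|K] _ _ IH1 IH2.
have [s1 s2] := step (K + d)%N.
rewrite addnS; split.
- by apply: le_trans IH1; rewrite addSn in s1 *.
- by apply: le_trans IH2 _; rewrite addSn in s2 *.
Qed.
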